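(* Let $S\subset M$ be a saturated affine semigroup with $w(S)=S$ for all $w\in W$, and let $u\in D\cap S$. Writing $\Psi(\chi^u)=\sum_{v\in D\cap\Lambda}a_v\underline{\chi}^v$, every $v$ with $a_v\ne 0$ lies in $S$.
   Context: Setting: $V$ is a finite-dimensional real vector space with positive definite symmetric bilinear form $\langle\,,\rangle$; $M\subset V$ is a lattice; $W\subset\mathrm{GL}(V)$ is a finite group generated by reflections $s_\alpha(v)=v-2\frac{\langle v,\alpha\rangle}{\langle\alpha,\alpha\rangle}\alpha$ and preserving $M$; $\Delta=\{\alpha_1,\dots,\alpha_r\}\subset M$ is a simple system for $W$ (a linearly independent subset of a root system for $W$, spanning the same subspace, such that every root is a real combination of $\Delta$ with coefficients of one sign) chosen so that $M\subset\Lambda$, where $\Lambda=\{v\in V:2\frac{\langle v,\alpha_i\rangle}{\langle\alpha_i,\alpha_i\rangle}\in\mathbb{Z}\ \forall i\}$ is the weight group (such $\Delta$ exists, and $W$ preserves $\Lambda$). Let $Z=\bigcap_i\alpha_i^\perp$ and let $\lambda_1,\dots,\lambda_r\in Z^\perp$ be the fundamental weights, defined by $2\frac{\langle\lambda_i,\alpha_j\rangle}{\langle\alpha_j,\alpha_j\rangle}=\delta_{ij}$. Then $\Lambda=Z\oplus\Lambda_\circ$ with $\Lambda_\circ=\mathbb{Z}\langle\lambda_1,\dots,\lambda_r\rangle$, and the fundamental domain is $D=\{v:\langle v,\alpha_i\rangle\ge0\ \forall i\}=Z\times\mathbb{R}_{\ge0}\langle\lambda_1,\dots,\lambda_r\rangle$.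 A saturated affine semigroup is a finitely generated $\mathbb{Z}_{\ge0}$-submodule $S\subset M$ such that $km\in S$ with $k\in\mathbb{Z}_{>0}$, $m\in M$ implies $m\in S$. For a semigroup $S$, $\mathbb{Z}[S]$ is its semigroup ring with basis $\chi^s$, $\chi^s\chi^t=\chi^{s+t}$, and $W$ acts by $w\chi^s=\chi^{ws}$. $\Psi_\circ:\mathbb{Z}[D\cap\Lambda_\circ]\to\mathbb{Z}[\Lambda_\circ]^W$ is the ring homomorphism with $\Psi_\circ(\chi^{\lambda_i})=\sum_{v\in W\lambda_i}\chi^v$, and $\Psi:\mathbb{Z}[D\cap\Lambda]\to\mathbb{Z}[\Lambda]^W$ is its $\mathbb{Z}[Z]$-linear extension: for $u=z+u_\circ$ with $z\in Z$, $u_\circ\in D\cap\Lambda_\circ$, $\Psi(\chi^u)=\chi^z\Psi_\circ(\chi^{u_\circ})$. For $u\in D\cap\Lambda$, $\underline{\chi}^u:=\sum_{v\in Wu}\chi^v$; these form a $\mathbb{Z}$-basis of $\mathbb{Z}[\Lambda]^W$. *)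

(* Defs.v *)
(* V = 'rV[R]_n with R : realType (the real numbers),
   vectors are row vectors and matrices act on the right: w(v) := v *m w. *)
From HB Require Import structures.
From mathcomp Require Import all_boot all_order all_algebra.
From mathcomp Require Import reals.
Set Implicit Arguments. Unset Strict Implicit. Unset Printing Implicit Defensive.
Import Order.TTheory GRing.Theory Num.Theory.
Local Open Scope ring_scope.

Section Setting.
Variables (R : realType) (n : nat).
Notation vec := 'rV[R]_n.

Definition form (G : 'M[R]_n) (x y : vec) : R := (x *m G *m y^T) 0 0.

Definition pos_def_sym (G : 'M[R]_n) : Prop :=
  G^T = G /\ forall v : vec, v != 0 -> 0 < form G v v.

(* the reflection s_a : v |-> v - 2 <v,a>/<a,a> a, as a matrix acting on the right *)
Definition refl (G : 'M[R]_n) (a : vec) : 'M[R]_n :=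
  1%:M - (2 / form G a a) *: (G *m a^T *m a).

Definition prod_mx (ms : seq 'M[R]_n) : 'M[R]_n := foldr (@mulmx R n n n) 1%:M ms.

Definition inM (L : 'M[R]_n) (v : vec) : Prop :=
  exists m : 'rV[int]_n, v = map_mx (fun x : int => x%:~R) m *m L.

(* W (given by the finite list ws of its elements) is a finite group generated
   by reflections *)
Definition finite_refl_group (G : 'M[R]_n) (ws : seq 'M[R]_n) : Prop :=
  [/\ 1%:M \in ws,
      (forall w1 w2, w1 \in ws -> w2 \in ws -> w1 *m w2 \in ws),
      (forall w, w \in ws -> exists2 w', w' \in ws & w *m w' = 1%:M) &
      (forall w, w \in ws -> exists bs : seq vec,
          [/\ all (fun b => b != 0) bs, all (fun b => refl G b \in ws) bs &
              w = prod_mx [seq refl G b | b <- bs]])].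

Definition preserves (ws : seq 'M[R]_n) (P : vec -> Prop) : Prop :=
  forall w v, w \in ws -> P v -> P (v *m w).

(* phi is a root system for W (Humphreys' definition) *)
Definition root_system_for (G : 'M[R]_n) (ws : seq 'M[R]_n) (phi : seq vec) : Prop :=
  [/\ (forall b, b \in phi -> b != 0),
      (forall b (c : R), b \in phi -> (c *: b \in phi <-> (c = 1 \/ c = -1))),
      (forall b c, b \in phi -> c \in phi -> c *m refl G b \in phi),
      (forall b, b \in phi -> refl G b \in ws) &
      (forall w, w \in ws -> exists2 bs : seq vec, all (fun b => b \in phi) bs &
              w = prod_mx [seq refl G b | b <- bs])].

Definition simple_system (r : nat) (phi : seq vec) (alpha : 'I_r -> vec) : Prop :=
  [/\ (forall i, alpha i \in phi),
      (forall c : 'I_r -> R, \sum_i c i *: alpha i = 0 -> forall i, c i = 0) &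
      (forall b, b \in phi -> exists c : 'I_r -> R,
          b = \sum_i c i *: alpha i /\
          ((forall i, 0 <= c i) \/ (forall i, c i <= 0)))].

Definition inLambda (G : 'M[R]_n) (r : nat) (alpha : 'I_r -> vec) (v : vec) : Prop :=
  forall i, exists c : int, 2 * form G v (alpha i) / form G (alpha i) (alpha i) = c%:~R.

Definition inZ (G : 'M[R]_n) (r : nat) (alpha : 'I_r -> vec) (v : vec) : Prop :=
  forall i, form G v (alpha i) = 0.

Definition inD (G : 'M[R]_n) (r : nat) (alpha : 'I_r -> vec) (v : vec) : Prop :=
  forall i, 0 <= form G v (alpha i).

Definition fund_weights (G : 'M[R]_n) (r : nat) (alpha lambda : 'I_r -> vec) : Prop :=
  (forall i j, 2 * form G (lambda i) (alpha j) / form G (alpha j) (alpha j)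
               = (i == j)%:R) /\
  (forall i y, inZ G alpha y -> form G (lambda i) y = 0).

Definition saturated_affine_semigroup (L : 'M[R]_n) (S : vec -> Prop) : Prop :=
  (exists gs : seq vec, (forall g, g \in gs -> inM L g) /\
     (forall v, S v <-> exists c : 'I_(size gs) -> nat,
                          v = \sum_(j < size gs) (c j)%:R *: gs`_j)) /\
  (forall (k : nat) m, (0 < k)%N -> inM L m -> S (k%:R *: m) -> S m).

Definition W_stable (ws : seq 'M[R]_n) (S : vec -> Prop) : Prop :=
  forall w, w \in ws ->
    (forall s, S s -> S (s *m w)) /\ (forall s, S s -> exists2 t, S t & s = t *m w).

(* group ring Z[V]: formal finite sums  sum c chi^x, given as lists of (c, x) *)
Definition gring := seq (int * vec).
Definition coef (f : gring) (v : vec) : int := \sum_(p <- f | p.2 == v) p.1.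
Definition chi (x : vec) : gring := [:: (1%:Z, x)].
Definition gone : gring := chi 0.
Definition gmul (f g : gring) : gring :=
  [seq (p.1 * q.1, p.2 + q.2) | p <- f, q <- g].
Definition gexp (f : gring) (k : nat) : gring := iter k (gmul f) gone.

Definition orbsum (ws : seq 'M[R]_n) (v : vec) : gring :=
  [seq (1%:Z, x) | x <- undup [seq v *m w | w <- ws]].

(* Psi_o(chi^{sum k_i lambda_i}) = prod_i Psi_o(chi^{lambda_i})^{k_i}, and
   Psi(chi^{z + u_o}) = chi^z Psi_o(chi^{u_o}) *)
Definition Psi_circ (ws : seq 'M[R]_n) (r : nat) (lambda : 'I_r -> vec)
  (k : 'I_r -> nat) : gring :=
  foldr gmul gone [seq gexp (orbsum ws (lambda i)) (k i) | i <- enum 'I_r].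
Definition Psi (ws : seq 'M[R]_n) (r : nat) (lambda : 'I_r -> vec) (z : vec)
  (k : 'I_r -> nat) : gring := gmul (chi z) (Psi_circ ws lambda k).

End Setting.

(* Main.v *)
Require Import Defs.
From HB Require Import structures.
From mathcomp Require Import all_boot all_order all_algebra.
From mathcomp Require Import reals.
From mathcomp Require Import ring lra.
Set Implicit Arguments. Unset Strict Implicit. Unset Printing Implicit Defensive.
Import Order.TTheory GRing.Theory Num.Theory.
Local Open Scope ring_scope.

Section Form.
Variables (R : realType) (n : nat) (G : 'M[R]_n).
Hypothesis Gsym : G^T = G.
Local Notation vec := 'rV[R]_n.
Local Notation fm := (Defs.form G).

Lemma formDl (x y z : vec) : fm (x + y) z = fm x z + fm y z.
Proof. by rewrite /Defs.form !mulmxDl mxE. Qed.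
Lemma formZl c (x z : vec) : fm (c *: x) z = c * fm x z.
Proof. by rewrite /Defs.form -!scalemxAl mxE. Qed.
Lemma formDr (x y z : vec) : fm z (x + y) = fm z x + fm z y.
Proof. by rewrite /Defs.form linearD /= mulmxDr mxE. Qed.
Lemma formZr c (x z : vec) : fm z (c *: x) = c * fm z x.
Proof. by rewrite /Defs.form linearZ /= -scalemxAr mxE. Qed.
Lemma formNl (x z : vec) : fm (- x) z = - fm x z.
Proof. by rewrite -scaleN1r formZl mulN1r. Qed.
Lemma formNr (x z : vec) : fm z (- x) = - fm z x.
Proof. by rewrite -scaleN1r formZr mulN1r. Qed.
Lemma formBl (x y z : vec) : fm (x - y) z = fm x z - fm y z.
Proof. by rewrite formDl formNl. Qed.
Lemma formBr (x y z : vec) : fm z (x - y) = fm z x - fm z y.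
Proof. by rewrite formDr formNr. Qed.
Lemma form0l (z : vec) : fm 0 z = 0.
Proof. by rewrite -(scale0r 0) formZl mul0r. Qed.
Lemma form0r (z : vec) : fm z 0 = 0.
Proof. by rewrite -(scale0r 0) formZr mul0r. Qed.
Lemma form_suml I (s : seq I) (P : pred I) (F : I -> vec) z :
  fm (\sum_(i <- s | P i) F i) z = \sum_(i <- s | P i) fm (F i) z.
Proof.
elim/big_rec2: _ => [|i y1 y2 _ <-]; first by rewrite form0l.
by rewrite formDl.
Qed.
Lemma form_sumr I (s : seq I) (P : pred I) (F : I -> vec) z :
  fm z (\sum_(i <- s | P i) F i) = \sum_(i <- s | P i) fm z (F i).
Proof.
elim/big_rec2: _ => [|i y1 y2 _ <-]; first by rewrite form0r.
by rewrite formDr.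
Qed.
Lemma form_sym (x y : vec) : fm x y = fm y x.
Proof.
rewrite /Defs.form.
have -> : (x *m G *m y^T) 0 0 = ((x *m G *m y^T)^T) 0 0 by rewrite [in RHS]mxE.
by rewrite !trmx_mul trmxK Gsym mulmxA.
Qed.

Lemma mulmx_rank1 (x a : vec) : x *m (G *m a^T *m a) = fm x a *: a.
Proof. by rewrite !mulmxA [x *m G *m a^T]mx11_scalar mul_scalar_mx. Qed.

Lemma refl_act (x a : vec) :
  x *m refl G a = x - (2 / fm a a * fm x a) *: a.
Proof.
by rewrite /refl mulmxBr mulmx1 -scalemxAr mulmx_rank1 scalerA.
Qed.

Lemma mx_ext m (A B : 'M[R]_(n, m)) : (forall x : vec, x *m A = x *m B) -> A = B.
Proof. by move=> h; apply/row_matrixP => i; rewrite !rowE h. Qed.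

Lemma refl_form (a x y : vec) : fm a a != 0 ->
  fm (x *m refl G a) (y *m refl G a) = fm x y.
Proof.
move=> h; rewrite !refl_act formBl !formBr !formZl !formZr.
idtac.
rewrite (form_sym a y); by field.
Qed.

Lemma refl_invol (a x : vec) : fm a a != 0 -> x *m refl G a *m refl G a = x.
Proof.
move=> h; rewrite [LHS]refl_act [in X in _ - X]refl_act formBl formZl.

have -> : 2 / fm a a * (fm x a - 2 / fm a a * fm x a * fm a a) = - (2 / fm a a * fm x a) by field.
by rewrite scaleNr opprK refl_act subrK.
Qed.

Lemma reflN (a : vec) : refl G (- a) = refl G a.
Proof.
rewrite /refl formNl formNr opprK mulmxN.
have -> : (- a)^T = - a^T by apply/matrixP=> i j; rewrite !mxE.
by rewrite mulmxN mulNmx opprK.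
Qed.

Definition orth (v : 'M[R]_n) := forall x y : vec, fm (x *m v) (y *m v) = fm x y.

Lemma refl_conj (a : vec) (v : 'M[R]_n) : orth v ->
  refl G a *m v = v *m refl G (a *m v).
Proof.
move=> ov; apply: mx_ext => x.
by rewrite !mulmxA !refl_act !ov mulmxBl -scalemxAl.
Qed.

End Form.

Lemma count_lt (T : eqType) (P Q : pred T) (s : seq T) x :
  (forall g, P g -> Q g) -> x \in s -> Q x -> ~~ P x -> (count P s < count Q s)%N.
Proof.
move=> PQ; elim: s => [|y s IH] //= /[swap] Qx /[swap] nPx.
rewrite in_cons => /orP [/eqP <-|xs].
  rewrite Qx (negPf nPx) add0n add1n ltnS; apply: sub_count => g; exact: PQ.
rewrite -addnS; apply: leq_add; last exact: IH.
have := PQ y; case: (P y) => [-> //|_]; exact: leq0n.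
Qed.


Section Weyl.
Variables (R : realType) (n r : nat) (G : 'M[R]_n) (ws : seq 'M[R]_n)
  (phi : seq 'rV[R]_n) (alpha lambda : 'I_r -> 'rV[R]_n).
Local Notation vec := 'rV[R]_n.
Local Notation fm := (Defs.form G).
Hypotheses (Gsym : G^T = G) (Gpos : forall v : vec, v != 0 -> 0 < fm v v)
  (FG : finite_refl_group G ws) (RS : root_system_for G ws phi)
  (SS : simple_system phi alpha) (FW : fund_weights G alpha lambda).

Lemma phi_nz b : b \in phi -> fm b b != 0.
Proof. by case: RS => h _ _ _ _ /h /Gpos; rewrite lt0r => /andP[]. Qed.
Lemma phi_pos b : b \in phi -> 0 < fm b b.
Proof. by case: RS => h _ _ _ _ /h /Gpos. Qed.
Lemma alpha_in i : alpha i \in phi.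
Proof. by case: SS. Qed.
Lemma phi_refl b c : b \in phi -> c \in phi -> c *m refl G b \in phi.
Proof. by case: RS => _ _ h _ _; apply: h. Qed.
Lemma phi_scale b c : b \in phi -> (c *: b \in phi <-> (c = 1 \/ c = -1)).
Proof. by case: RS => _ h _ _ _; apply: h. Qed.
Lemma phiN b : b \in phi -> - b \in phi.
Proof. by move=> hb; rewrite -scaleN1r; apply/(phi_scale _ hb); right. Qed.

Definition sr i := refl G (alpha i).
Definition word (l : seq 'I_r) := prod_mx [seq sr i | i <- l].

Lemma word_nil : word [::] = 1%:M. Proof. by []. Qed.
Lemma word_cons i l : word (i :: l) = sr i *m word l. Proof. by []. Qed.
Lemma word_cat l1 l2 : word (l1 ++ l2) = word l1 *m word l2.
Proof. by elim: l1 => [|i l IH] /=; rewrite ?mul1mx // word_cons IH mulmxA. Qed.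
Lemma word_rcons l i : word (rcons l i) = word l *m sr i.
Proof. by rewrite -cats1 word_cat word_cons word_nil mulmx1. Qed.

Lemma sr_invol i : sr i *m sr i = 1%:M.
Proof.
apply: mx_ext => x; rewrite mulmxA mulmx1 refl_invol //.
exact: phi_nz (alpha_in i).
Qed.
Lemma word_rev l : word (rev l) *m word l = 1%:M.
Proof.
elim: l => [|i l IH]; first by rewrite mulmx1.
rewrite rev_cons word_rcons word_cons mulmxA -(mulmxA (word (rev l))) sr_invol.
by rewrite mulmx1.
Qed.

Lemma sr_orth i : orth G (sr i).
Proof. move=> x y; apply: refl_form => //; exact: phi_nz (alpha_in i). Qed.
Lemma word_orth l : orth G (word l).
Proof.
elim: l => [|i l IH] x y; first by rewrite !mulmx1.
by rewrite word_cons !mulmxA IH sr_orth.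
Qed.
Lemma phi_word b l : b \in phi -> b *m word l \in phi.
Proof.
elim: l b => [|i l IH] b hb; first by rewrite mulmx1.
by rewrite word_cons mulmxA; apply: IH; apply: phi_refl => //; exact: alpha_in.
Qed.

Definition pos (b : vec) := exists c : 'I_r -> R,
  b = \sum_i c i *: alpha i /\ forall i, 0 <= c i.
Definition neg (b : vec) := exists c : 'I_r -> R,
  b = \sum_i c i *: alpha i /\ forall i, c i <= 0.

Lemma coef_uniq (c d : 'I_r -> R) :
  \sum_i c i *: alpha i = \sum_i d i *: alpha i -> forall i, c i = d i.
Proof.
move=> h i; apply/eqP; rewrite -subr_eq0; apply/eqP.
case: SS => _ li _; apply: (li (fun i => c i - d i)).
under eq_bigr do rewrite scalerBl.
by rewrite sumrB h subrr.
Qed.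

Lemma pos_or_neg b : b \in phi -> pos b \/ neg b.
Proof.
case: SS => _ _ h /h [c [-> [hc|hc]]]; [left|right]; by exists c.
Qed.

Lemma not_pos_neg b : b \in phi -> pos b -> neg b -> False.
Proof.
move=> hb [c [ec hc]] [d [ed hd]].
have cd := coef_uniq (etrans (esym ec) ed).
have c0 i : c i = 0 by apply/eqP; rewrite eq_le hc andbT cd hd.
move: (phi_nz hb); rewrite ec big1 ?form0l ?eqxx // => i _.
by rewrite c0 scale0r.
Qed.

Lemma posN b : pos b -> neg (- b).
Proof.
move=> [c [-> hc]]; exists (fun i => - c i); split.
  by rewrite -sumrN; apply: eq_bigr => i _; rewrite scaleNr.
by move=> i; rewrite oppr_le0.
Qed.
Lemma negN b : neg b -> pos (- b).
Proof.
move=> [c [-> hc]]; exists (fun i => - c i); split.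
  by rewrite -sumrN; apply: eq_bigr => i _; rewrite scaleNr.
by move=> i; rewrite oppr_ge0.
Qed.

Lemma sum_delta j (t : R) :
  \sum_i ((i == j)%:R * t) *: alpha i = t *: alpha j.
Proof.
rewrite (bigD1 j) //= eqxx mul1r big1 ?addr0 // => i /negPf ->.
by rewrite mul0r scale0r.
Qed.

Lemma L1 b j : b \in phi -> pos b -> b != alpha j -> pos (b *m sr j).
Proof.
move=> hb hp hne.
have hbs : b *m sr j \in phi by apply: phi_refl => //; exact: alpha_in.
case: (pos_or_neg hbs) => // -[e [ee he]].
case: hp => [c [ec hc]].
set t := 2 / fm (alpha j) (alpha j) * fm b (alpha j).
have e2 : b *m sr j = \sum_i (c i - (i == j)%:R * t) *: alpha i.
  under eq_bigr do rewrite scalerBl.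
  by rewrite sumrB sum_delta -ec /sr refl_act.
have ce := coef_uniq (etrans (esym ee) e2).
have c0 i : i != j -> c i = 0.
  move=> /negPf hij; apply/eqP; rewrite eq_le hc andbT.
  by move: (he i); rewrite ce hij mul0r subr0.
have ebj : b = c j *: alpha j.
  rewrite ec (bigD1 j) //= big1 ?addr0 // => i hi.
  by rewrite c0 // scale0r.
have := (phi_scale (c j) (alpha_in j)).1; rewrite -ebj => /(_ hb) [c1|cm1].
  by move: hne; rewrite ebj c1 scale1r eqxx.
by move: (hc j); rewrite cm1 oppr_ge0 ler10.
Qed.

Lemma EL l b : b \in phi -> pos b -> neg (b *m word l) ->
  exists2 l', (size l' < size l)%N & refl G b *m word l = word l'.
Proof.
elim: l b => [|j l IH] b hb hp hn.
  by exfalso; apply: (not_pos_neg hb hp); rewrite mulmx1 in hn.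
case: (eqVneq b (alpha j)) => [->|hne].
  by exists l => //; rewrite word_cons mulmxA -/(sr j) sr_invol mul1mx.
have hp' := L1 hb hp hne.
have hb' : b *m sr j \in phi by apply: phi_refl => //; exact: alpha_in.
move: hn; rewrite word_cons mulmxA => hn.
have [l' hl' el'] := IH _ hb' hp' hn.
exists (j :: l') => //.
rewrite word_cons mulmxA refl_conj //; last exact: sr_orth.
by rewrite -mulmxA el'.
Qed.

Lemma alpha_pos i : pos (alpha i).
Proof.
exists (fun k => (k == i)%:R); split; last by move=> k; rewrite ler0n.
rewrite (bigD1 i) //= eqxx scale1r big1 ?addr0 // => k /negPf ->.
by rewrite scale0r.
Qed.

Lemma alpha_sr j : alpha j *m sr j = - alpha j.
Proof.
rewrite /sr refl_act divfK; last exact: phi_nz (alpha_in j).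
by rewrite scaler_nat mulr2n opprD addrA subrr add0r.
Qed.

Lemma dom_unique x l : inD G alpha x -> inD G alpha (x *m word l) ->
  x *m word l = x.
Proof.
move=> hx.
have [m] := ubnP (size l); elim: m l => // m IHm l /ltnSE hl hxl.
have case1 i : neg (alpha i *m word l) -> x *m word l = x.
  move=> hn.
  have [l' hl' el'] := EL (alpha_in i) (alpha_pos i) hn.
  have h0 : fm x (alpha i) = 0.
    apply/eqP; rewrite eq_le hx andbT.
    rewrite -(word_orth l) .
    case: hn => [d [-> hd]]; rewrite form_sumr sumr_le0 // => k _.
    by rewrite formZr mulr_le0_ge0.
  have xs : x *m sr i = x.
    by rewrite /sr refl_act h0 mulr0 scale0r subr0.
  have e : x *m word l = x *m word l'.
    by rewrite -el' /sr mulmxA -/(sr i) xs.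
  rewrite e; apply: IHm; first by apply: leq_trans hl.
  by rewrite -e.
case: l hl hxl case1 => [|j l0] hl hxl case1; first by rewrite mulmx1.
have hj : alpha j \in phi := alpha_in j.
case: (pos_or_neg (phi_word l0 hj)) => hpn.
  apply: (case1 j).
  rewrite word_cons mulmxA alpha_sr mulNmx.
  exact: posN.
have [l' hl' el'] := EL hj (alpha_pos j) hpn.
have e : word (j :: l0) = word l' by rewrite word_cons -el'.
rewrite e; apply: IHm; first by apply: leq_trans hl; rewrite /= ltnS ltnW.
by rewrite -e.
Qed.


Lemma lam_alpha j i :
  fm (lambda j) (alpha i) = (j == i)%:R * fm (alpha i) (alpha i) / 2.
Proof.
have hA := phi_nz (alpha_in i).
rewrite -(FW.1 j i); field; exact: hA.
Qed.

Definition rho := \sum_j lambda j.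

Lemma h_alpha i : 0 < fm (alpha i) rho.
Proof.
rewrite form_sumr.
under eq_bigr do rewrite form_sym // lam_alpha.
rewrite (bigD1 i) //= eqxx mul1r big1 ?addr0; last first.
  by move=> j /negPf ->; rewrite !mul0r.
by rewrite divr_gt0 // (phi_pos (alpha_in i)).
Qed.

Lemma CONJ b : b \in phi -> pos b -> exists i l, b = alpha i *m word l.
Proof.
set h := fun x => fm x rho.
have [m] := ubnP (count (fun g => h g < h b) phi).
elim: m b => // m IHm b /ltnSE hm hb hp.
have hp' := hp; case: hp' => [c [ec hc]].
have hbb : 0 < fm b b := phi_pos hb.
have [i hi] : exists i, 0 < c i * fm (alpha i) b.
  case: (boolP [exists i, 0 < c i * fm (alpha i) b]) => [/existsP //|/existsPn H].
  move: hbb; rewrite {1}ec form_suml.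
  move=> hs; exfalso; move: hs; apply/negP; rewrite -leNgt; apply: sumr_le0 => i _; rewrite formZl.
  by move: (H i); rewrite ltNge negbK.
have hf : 0 < fm (alpha i) b.
  move: (hc i) hi; rewrite le0r => /orP[/eqP ->|ci]; first by rewrite mul0r ltxx.
  by rewrite pmulr_rgt0.
case: (eqVneq b (alpha i)) => [->|hne]; first by exists i, [::]; rewrite mulmx1.
have hp2 := L1 hb hp hne.
have hb2 : b *m sr i \in phi by apply: phi_refl => //; exact: alpha_in.
have hlt : h (b *m sr i) < h b.
  rewrite /h /sr refl_act formBl formZl ltrBlDr ltrDl.
  apply: mulr_gt0; last exact: h_alpha.
  apply: mulr_gt0; first by rewrite divr_gt0 // (phi_pos (alpha_in i)).
  by rewrite (form_sym Gsym b).
have hcnt : (count (fun g => (h g < h (b *m sr i))%R) phi < m)%N.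
  apply: leq_trans hm.
  apply: (count_lt (x := b *m sr i)) => //=.
  - by move=> g hg; exact: (lt_trans hg hlt).
  - by rewrite ltxx.
have [k [l el]] := IHm _ hcnt hb2 hp2.
exists k, (rcons l i).
rewrite word_rcons mulmxA -el -mulmxA sr_invol ?mulmx1 //.
Qed.

Lemma RW b : b \in phi -> exists l, refl G b = word l.
Proof.
move=> hb.
have [hp|hn] := pos_or_neg hb.
  have [i [l ->]] := CONJ hb hp.
  exists (rev l ++ i :: l).
  rewrite word_cat word_cons -(mul1mx (refl _ _)) -(word_rev l).
  rewrite -!mulmxA; congr (_ *m _).
  by rewrite refl_conj //; exact: word_orth.
have [i [l el]] := CONJ (phiN hb) (negN hn).
exists (rev l ++ i :: l).
rewrite -reflN el word_cat word_cons -(mul1mx (refl _ _)) -(word_rev l).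
rewrite -!mulmxA; congr (_ *m _).
by rewrite refl_conj //; exact: word_orth.
Qed.

Lemma WW w : w \in ws -> exists l, w = word l.
Proof.
case: RS => _ _ _ _ h /h [bs /allP hbs ->] {h}.
elim: bs hbs => [|b bs IH] hbs; first by exists [::].
have [l1 e1] := RW (hbs b (mem_head _ _)).
have [l2 e2] := IH (fun x hx => hbs x (@mem_behead _ (b :: bs) _ hx)).
by exists (l1 ++ l2); rewrite word_cat -e1 -e2.
Qed.

Lemma dom_unique_ws x w : w \in ws -> inD G alpha x -> inD G alpha (x *m w) ->
  x *m w = x.
Proof. by move=> /WW [l ->]; apply: dom_unique. Qed.


Variables (L : 'M[R]_n) (S : vec -> Prop).
Hypotheses (AM : forall i, inM L (alpha i))
  (ML : forall m, inM L m -> inLambda G alpha m)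
  (SAT : saturated_affine_semigroup L S) (WS : W_stable ws S).

Lemma ws1 : 1%:M \in ws. Proof. by case: FG. Qed.
Lemma wsM w1 w2 : w1 \in ws -> w2 \in ws -> w1 *m w2 \in ws.
Proof. by case: FG => _ h _ _; apply: h. Qed.
Lemma wsV w : w \in ws -> exists2 w', w' \in ws & w' *m w = 1%:M /\ w *m w' = 1%:M.
Proof.
case: FG => _ _ h _ /h [w' hw' e]; exists w' => //; split => //.
exact: mulmx1C.
Qed.
Lemma sr_ws i : sr i \in ws.
Proof. by case: RS => _ _ _ h _; apply: h; exact: alpha_in. Qed.

Lemma lamb_sr x j : inLambda G alpha x -> inLambda G alpha (x *m sr j).
Proof.
move=> hx i.
have [c hc] := hx i; have [d hd] := hx j.
have [e he] := ML (AM j) i.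
have hAi := phi_nz (alpha_in i); have hAj := phi_nz (alpha_in j).
exists (c - d * e).
rewrite /sr refl_act formBl formZl rmorphB rmorphM /= -hc -hd -he.
by field; rewrite hAi hAj.
Qed.
Lemma lamb_word x l : inLambda G alpha x -> inLambda G alpha (x *m word l).
Proof.
elim: l x => [|j l IH] x hx; first by rewrite mulmx1.
by rewrite word_cons mulmxA; apply: IH; apply: lamb_sr.
Qed.
Lemma lamb_ws x w : w \in ws -> inLambda G alpha x -> inLambda G alpha (x *m w).
Proof. by move=> /WW [l ->]; apply: lamb_word. Qed.
Lemma lamb0 : inLambda G alpha 0.
Proof. by move=> i; exists 0; rewrite form0l mulr0 mul0r. Qed.
Lemma lambD x y : inLambda G alpha x -> inLambda G alpha y -> inLambda G alpha (x + y).
Proof.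
move=> hx hy i; have [c hc] := hx i; have [d hd] := hy i.
by exists (c + d); rewrite formDl rmorphD /= -hc -hd mulrDr mulrDl.
Qed.
Lemma lamb_lambda i : inLambda G alpha (lambda i).
Proof. by move=> j; exists (i == j)%:Z; rewrite (FW.1 i j); case: (i == j). Qed.
Lemma lamb_Z x : inZ G alpha x -> inLambda G alpha x.
Proof. by move=> hx i; exists 0; rewrite hx mulr0 mul0r. Qed.
Lemma dom0 : inD G alpha 0.
Proof. by move=> i; rewrite form0l. Qed.
Lemma domD x y : inD G alpha x -> inD G alpha y -> inD G alpha (x + y).
Proof. by move=> hx hy i; rewrite formDl addr_ge0. Qed.
Lemma dom_lambda i : inD G alpha (lambda i).
Proof.
move=> j; rewrite lam_alpha; apply: divr_ge0 => //; apply: mulr_ge0 => //.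
exact: ltW (phi_pos (alpha_in j)).
Qed.
Lemma dom_Z x : inZ G alpha x -> inD G alpha x.
Proof. by move=> hx i; rewrite hx. Qed.

Definition inZA (x : vec) := exists c : 'I_r -> int, x = \sum_i (c i)%:~R *: alpha i.
Lemma inZA0 : inZA 0.
Proof. by exists (fun _ => 0); rewrite big1 // => i _; rewrite scale0r. Qed.
Lemma inZAD x y : inZA x -> inZA y -> inZA (x + y).
Proof.
move=> [c ->] [d ->]; exists (fun i => c i + d i); rewrite -big_split /=.
by apply: eq_bigr => i _; rewrite rmorphD scalerDl.
Qed.
Lemma inZA_alpha (e : int) j : inZA (e%:~R *: alpha j).
Proof.
exists (fun i => if i == j then e else 0).
rewrite (bigD1 j) //= eqxx big1 ?addr0 // => i /negPf ->.
by rewrite scale0r.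
Qed.
Lemma inZA_word x l : inLambda G alpha x -> inZA (x *m word l - x).
Proof.
elim: l x => [|j l IH] x hx; first by rewrite mulmx1 subrr; exact: inZA0.
rewrite word_cons mulmxA.
have -> : x *m sr j *m word l - x = (x *m sr j *m word l - x *m sr j) + (x *m sr j - x).
  by rewrite addrA subrK.
apply: inZAD; first by apply: IH; apply: lamb_sr.
have [d hd] := hx j.
rewrite /sr refl_act addrC addKr.
have -> : 2 / fm (alpha j) (alpha j) * fm x (alpha j) = d%:~R.
  rewrite -hd; field; exact: phi_nz (alpha_in j).
by rewrite -scaleNr -rmorphN; apply: inZA_alpha.
Qed.

Lemma inM0 : inM L 0.
Proof. by exists 0; rewrite (_ : map_mx _ 0 = 0) ?mul0mx //; apply/matrixP => i j; rewrite !mxE. Qed.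
Lemma inMD x y : inM L x -> inM L y -> inM L (x + y).
Proof.
move=> [a ->] [b ->]; exists (a + b).
rewrite -mulmxDl; congr (_ *m _); apply/matrixP => i j; rewrite !mxE.
by rewrite intrD.
Qed.
Lemma inMZ (e : int) x : inM L x -> inM L (e%:~R *: x).
Proof.
move=> [a ->]; exists (e *: a).
rewrite scalemxAl; congr (_ *m _); apply/matrixP => i j; rewrite !mxE.
by rewrite intrM.
Qed.
Lemma inMn (k : nat) x : inM L x -> inM L (k%:R *: x).
Proof. by move=> hx; rewrite -[k%:R]/((k%:Z)%:~R); apply: inMZ. Qed.
Lemma inZA_M x : inZA x -> inM L x.
Proof.
move=> [c ->]; elim/big_ind: _ => //; first exact: inM0.
  exact: inMD.
by move=> i _; apply: inMZ.
Qed.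

Lemma S_sum_char : exists gs : seq vec, (forall g, g \in gs -> inM L g) /\
     (forall v, S v <-> exists c : 'I_(size gs) -> nat,
                          v = \sum_(j < size gs) (c j)%:R *: gs`_j).
Proof. by case: SAT. Qed.
Lemma S0 : S 0.
Proof.
have [gs [_ h]] := S_sum_char; apply/h; exists (fun _ => 0%N).
by rewrite big1 // => j _; rewrite scale0r.
Qed.
Lemma SD x y : S x -> S y -> S (x + y).
Proof.
have [gs [_ h]] := S_sum_char.
move=> /h [c ->] /h [d ->]; apply/h; exists (fun j => c j + d j)%N.
by rewrite -big_split; apply: eq_bigr => j _; rewrite natrD scalerDl.
Qed.
Lemma Sn (k : nat) x : S x -> S (k%:R *: x).
Proof.
have [gs [_ h]] := S_sum_char.
move=> /h [c ->]; apply/h; exists (fun j => k * c j)%N.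
by rewrite scaler_sumr; apply: eq_bigr => j _; rewrite natrM scalerA.
Qed.
Lemma SM x : S x -> inM L x.
Proof.
have [gs [hg h]] := S_sum_char.
move=> /h [c ->]; elim/big_ind: _ => //; first exact: inM0.
  exact: inMD.
by move=> j _; apply: inMn; apply: hg; apply: mem_nth.
Qed.
Lemma SW x w : w \in ws -> S x -> S (x *m w).
Proof. by move=> /WS [h _]; apply: h. Qed.

(* rational convex hull of W U *)
Definition RC (U x : vec) := exists l : seq (nat * 'M[R]_n),
  [/\ all (fun p => p.2 \in ws) l, (0 < \sum_(p <- l) p.1)%N &
      (\sum_(p <- l) p.1)%:R *: x = \sum_(p <- l) (p.1)%:R *: (U *m p.2)].

Lemma RC_S U x : S U -> RC U x -> inM L x -> S x.
Proof.
move=> hU [l [hl hN e]] hx.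
case: SAT => _ sat; apply: (sat _ _ hN hx).
rewrite e big_seq; elim/big_ind: _ => //; first exact: S0.
  exact: SD.
move=> p hp; apply: Sn; apply: SW => //.
exact: (allP hl).
Qed.

Lemma R1 U : RC U U.
Proof.
exists [:: (1%N, 1%:M)]; split; rewrite ?big_seq1 //= ?mulmx1 //.
by rewrite ws1.
Qed.

Lemma R2 U x w : w \in ws -> RC U x -> RC U (x *m w).
Proof.
move=> hw [l [hl hN e]]; exists [seq (p.1, p.2 *m w) | p <- l]; split.
- by apply/allP => q /mapP [p hp ->] /=; apply: wsM => //; exact: (allP hl).
- by rewrite big_map.
rewrite !big_map /= scalemxAl e mulmx_suml; apply: eq_bigr => p _.
by rewrite -scalemxAl mulmxA.
Qed.

Lemma R3 U x p q (a c : nat) : RC U p -> RC U q -> (0 < a + c)%N ->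
  (a + c)%:R *: x = a%:R *: p + c%:R *: q -> RC U x.
Proof.
move=> [lp [hlp hNp ep]] [lq [hlq hNq eq]] hac e.
set Np := (\sum_(p <- lp) p.1)%N in hNp ep.
set Nq := (\sum_(p <- lq) p.1)%N in hNq eq.
exists ([seq (a * Nq * p.1, p.2)%N | p <- lp] ++ [seq (c * Np * p.1, p.2)%N | p <- lq]).
have hsum : (\sum_(p <- [seq (a * Nq * p.1, p.2)%N | p <- lp] ++
              [seq (c * Np * p.1, p.2)%N | p <- lq]) p.1 = (a + c) * (Np * Nq))%N.
  rewrite big_cat !big_map /= -!big_distrr /= -/Np -/Nq.
  by rewrite mulnDl -!mulnA [(Nq * Np)%N]mulnC.
split.
- rewrite all_cat; apply/andP; split; rewrite all_map; apply/allP => y hy /=.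
    exact: (allP hlp).
  exact: (allP hlq).
- by rewrite hsum !muln_gt0 hac hNp hNq.
rewrite hsum big_cat !big_map /=.
have -> : \sum_(j <- lp) (a * Nq * j.1)%:R *: (U *m j.2)
          = (a * Nq)%:R *: (Np%:R *: p) :> vec.
  by rewrite ep scaler_sumr; apply: eq_bigr => j _; rewrite scalerA natrM.
have -> : \sum_(j <- lq) (c * Np * j.1)%:R *: (U *m j.2)
          = (c * Np)%:R *: (Nq%:R *: q) :> vec.
  by rewrite eq scaler_sumr; apply: eq_bigr => j _; rewrite scalerA natrM.
rewrite natrM mulrC -scalerA e.
by apply/rowP => j; rewrite !mxE !natrM; ring.
Qed.

Lemma R4 U x (ys : seq (nat * vec)) : (forall y, y \in ys -> RC U y.2) ->
  (0 < \sum_(y <- ys) y.1)%N ->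
  (\sum_(y <- ys) y.1)%:R *: x = \sum_(y <- ys) (y.1)%:R *: y.2 -> RC U x.
Proof.
elim: ys x => [|[m y] ys IH] x hys; first by rewrite big_nil.
rewrite !big_cons /= => hN e.
have hy : RC U y by exact: (hys (m, y) (mem_head _ _)).
have hys' : forall y, y \in ys -> RC U y.2 by move=> y0 h0; apply: hys; rewrite in_cons h0 orbT.
set N' := (\sum_(y <- ys) y.1)%N in hN e.
case: (posnP N') => hN'.
  have h0 : \sum_(y <- ys) (y.1)%:R *: y.2 = 0 :> vec.
    rewrite big1_seq // => j /andP [_ hj].
    move: hN'; rewrite /N' => /eqP; rewrite sum_nat_seq_eq0 => /allP /(_ j hj) /=.
    by move=> /eqP ->; rewrite scale0r.
  apply: (R3 (p := y) (q := y) (a := m) (c := 0%N)) => //.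
    by rewrite addn0; rewrite hN' addn0 in hN.
  by move: e; rewrite h0 addr0 hN' => ->; rewrite scale0r addr0.
set x' := (N'%:R)^-1 *: \sum_(y <- ys) (y.1)%:R *: y.2.
have hN'0 : (N'%:R : R) != 0 by rewrite pnatr_eq0 -lt0n.
have hx' : RC U x'.
  apply: IH hys' hN' _.
  by rewrite /x' scalerA mulfV // scale1r.
apply: (R3 (p := y) (q := x') (a := m) (c := N')) => //.
by rewrite e /x' scalerA mulfV // scale1r.
Qed.

Lemma Qp lam mu w : inD G alpha lam -> inLambda G alpha lam ->
  inD G alpha mu -> inLambda G alpha mu -> w \in ws ->
  RC (lam + mu) (lam + mu *m w).
Proof.
move=> hDl hLl hDm hLm.
set h := fun x => fm x rho.
have [m] := ubnP (count (fun w' => (h (mu *m w) < h (mu *m w'))%R) ws).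
elim: m w => // m IHm w /ltnSE hm hw.
case: (boolP [forall i, 0 <= fm (mu *m w) (alpha i)]) => [/forallP hd|].
  by rewrite dom_unique_ws //; exact: R1.
move=> /forallPn [i]; rewrite -ltNge => hneg.
set y := mu *m w.
have hw' : w *m sr i \in ws by apply: wsM => //; exact: sr_ws.
set y' := mu *m (w *m sr i).
have hAi := phi_nz (alpha_in i).
have hyL : inLambda G alpha y by apply: lamb_ws.
have [ci hci] := hyL i; have [ai hai] := hLl i.
have ci_neg : ci%:~R < 0 :> R.
  rewrite -hci pmulr_llt0; last by rewrite invr_gt0 (phi_pos (alpha_in i)).
  by rewrite pmulr_rlt0.
have ai_pos : 0 <= ai%:~R :> R.
  rewrite -hai; apply: divr_ge0; last exact: ltW (phi_pos (alpha_in i)).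
  by apply: mulr_ge0 => //; apply: hDl.
have ey' : y' = y - ci%:~R *: alpha i.
  rewrite /y' mulmxA -/y /sr refl_act -hci; congr (_ - _ *: _); field; exact: hAi.
have hlt : h y < h y'.
  rewrite ey' /h formBl formZl.
  have hh := h_alpha i; nra.
have hcnt : (count (fun w'' => (h y' < h (mu *m w''))%R) ws < m)%N.
  apply: leq_trans hm.
  apply: (count_lt (x := w *m sr i)) => //=.
  - by move=> g hg; exact: (lt_trans hlt hg).
  - by rewrite -/y' ltxx.
have IH := IHm _ hcnt hw'.
have IH2 := R2 (sr_ws i) IH.
have ai_nat : ((`|ai|%N)%:R : R) = ai%:~R.
  by rewrite natr_absz ger0_norm // -(ler0z R).
have ci_nat : ((`|ci|%N)%:R : R) = - ci%:~R.
  by rewrite natr_absz ltr0_norm ?rmorphN // -(ltrz0 R).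
apply: (R3 (a := `|ai|%N) (c := `|ci|%N) IH IH2).
  rewrite addn_gt0; apply/orP; right; rewrite absz_gt0; apply/eqP => c0.
  by move: ci_neg; rewrite c0 ltxx.
have elam : lam *m sr i = lam - ai%:~R *: alpha i.
  rewrite /sr refl_act -hai; congr (_ - _ *: _); field; exact: hAi.
have ey's : y' *m sr i = y.
  by rewrite /y' mulmxA -/y refl_invol.
rewrite mulmxDl elam ey's natrD ai_nat ci_nat -/y' ey'.
by apply/rowP => j; rewrite !mxE; ring.
Qed.

Lemma M0 A B p w : RC A p -> inD G alpha A -> inLambda G alpha A ->
  inD G alpha B -> inLambda G alpha B -> w \in ws -> RC (A + B) (p + B *m w).
Proof.
move=> [l [hl hN e]] hDA hLA hDB hLB hw.
apply: (R4 (ys := [seq (q.1, A *m q.2 + B *m w) | q <- l])).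
- move=> y /mapP [q hq ->] /=.
  have hq2 : q.2 \in ws := allP hl q hq.
  have [w'' hw'' [e1 e2]] := wsV hq2.
  have := R2 hq2 (Qp hDA hLA hDB hLB (wsM hw hw'')).
  by rewrite mulmxDl -!mulmxA e1 mulmx1.
- by rewrite big_map.
rewrite !big_map /= scalerDr e natr_sum scaler_suml -big_split /=.
by apply: eq_bigr => q _; rewrite scalerDr.
Qed.

Lemma M1 z (T : seq ('I_r * 'M[R]_n)) : inZ G alpha z ->
  all (fun t => t.2 \in ws) T ->
  RC (z + \sum_(t <- T) lambda t.1) (z + \sum_(t <- T) lambda t.1 *m t.2).
Proof.
move=> hz; elim: T => [_|t T IH] /=; first by rewrite !big_nil; exact: R1.
move=> /andP [ht hT]; rewrite !big_cons !addrA ![z + lambda t.1 + _]addrAC.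
rewrite [z + lambda t.1 *m t.2 + _]addrAC.
apply: M0 => //; first exact: IH.
- apply: domD; first exact: dom_Z.
  by elim/big_ind: _ => //; [exact: dom0 | exact: domD | move=> *; exact: dom_lambda].
- apply: lambD; first exact: lamb_Z.
  by elim/big_ind: _ => //; [exact: lamb0 | exact: lambD | move=> *; exact: lamb_lambda].
- exact: dom_lambda.
- exact: lamb_lambda.
Qed.

Definition Pt (K y : vec) := exists T : seq ('I_r * 'M[R]_n),
  [/\ all (fun t => t.2 \in ws) T, \sum_(t <- T) lambda t.1 = K &
      y = \sum_(t <- T) lambda t.1 *m t.2].

Lemma Pt0 : Pt 0 0.
Proof. by exists [::]; rewrite !big_nil. Qed.
Lemma PtD K1 K2 y1 y2 : Pt K1 y1 -> Pt K2 y2 -> Pt (K1 + K2) (y1 + y2).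
Proof.
move=> [T1 [h1 e1 ->]] [T2 [h2 e2 ->]]; exists (T1 ++ T2).
by rewrite all_cat h1 h2 !big_cat e1 e2.
Qed.
Lemma Pt_gmul (f g : gring R n) K1 K2 p : p \in gmul f g ->
  (forall q, q \in f -> Pt K1 q.2) -> (forall q, q \in g -> Pt K2 q.2) ->
  Pt (K1 + K2) p.2.
Proof.
move=> /allpairsP [[q1 q2] [h1 h2 ep]] hf hg; rewrite ep /=.
exact: PtD (hf _ h1) (hg _ h2).
Qed.
Lemma Pt_orb i p : p \in orbsum ws (lambda i) -> Pt (lambda i) p.2.
Proof.
move=> /mapP [x]; rewrite mem_undup => /mapP [w hw ->] -> /=.
by exists [:: (i, w)]; rewrite /= hw !big_seq1.
Qed.
Lemma Pt_gexp (f : gring R n) K m p : (forall q, q \in f -> Pt K q.2) ->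
  p \in gexp f m -> Pt (m%:R *: K) p.2.
Proof.
move=> hf; elim: m p => [|m IH] p /=.
  by rewrite inE => /eqP -> /=; rewrite scale0r; exact: Pt0.
move=> hp; have := Pt_gmul hp hf IH.
by rewrite -[m.+1]addn1 natrD scalerDl scale1r addrC.
Qed.
Lemma Pt_fold (k : 'I_r -> nat) (s : seq 'I_r) p :
  p \in foldr (@gmul R n) (gone R n) [seq gexp (orbsum ws (lambda i)) (k i) | i <- s] ->
  Pt (\sum_(i <- s) (k i)%:R *: lambda i) p.2.
Proof.
elim: s p => [|i s IH] p /=.
  by rewrite big_nil inE => /eqP -> /=; exact: Pt0.
move=> hp; rewrite big_cons; apply: (Pt_gmul hp) => // q hq.
by apply: Pt_gexp hq => q' /Pt_orb.
Qed.
Lemma Pt_Psi z (k : 'I_r -> nat) p : p \in Psi ws lambda z k ->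
  exists y, Pt (\sum_i (k i)%:R *: lambda i) y /\ p.2 = z + y.
Proof.
move=> /allpairsP [[q1 q2] [h1 h2 ep]]; rewrite ep /=.
move: h1; rewrite /= inE => /eqP -> /=.
exists q2.2; split => //.
by have := Pt_fold h2; rewrite big_enum.
Qed.

Lemma coef_map1 (s0 : seq vec) x : uniq s0 ->
  coef [seq (1%:Z, y) | y <- s0] x = if x \in s0 then 1 else 0.
Proof.
rewrite /coef big_map /=.
elim: s0 => [|y s IH] /=; first by rewrite big_nil.
move=> /andP [ys us]; rewrite big_cons in_cons IH //.
case: (eqVneq y x) => [e|_] //=.
by rewrite -e (negPf ys) addr0.
Qed.

Lemma main_sec u z (k : 'I_r -> nat) (vs : seq vec) (a : vec -> int) :
  S u -> inZ G alpha z -> u = z + \sum_i (k i)%:R *: lambda i ->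
  uniq vs ->
  (forall v, v \in vs -> inD G alpha v /\ inLambda G alpha v) ->
  (forall x, coef (Psi ws lambda z k) x = \sum_(v <- vs) a v * coef (orbsum ws v) x) ->
  forall v, v \in vs -> a v != 0 -> S v.
Proof.
move=> Su hz hu uvs hvs hcoef v hv hav.
have hcv : coef (Psi ws lambda z k) v = a v.
  rewrite hcoef (bigD1_seq v) //= big1_seq ?addr0.
    rewrite /orbsum coef_map1 ?undup_uniq // mem_undup.
    by rewrite (_ : v \in _) ?mulr1 //; apply/mapP; exists 1%:M; rewrite ?mulmx1 ?ws1.
  move=> v' /andP [hne hv'].
  rewrite /orbsum coef_map1 ?undup_uniq // mem_undup.
  case: ifP => [/mapP [w hw ev]|]; last by rewrite mulr0.
  exfalso; move/negP: hne; apply; apply/eqP.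
  have [hD' _] := hvs _ hv'; have [hD _] := hvs _ hv.
  rewrite ev dom_unique_ws //; by rewrite -ev.
have /hasP [p hp /eqP ep] : has (fun p : int * vec => p.2 == v) (Psi ws lambda z k).
  apply/negPn/negP => hn; move: hav; rewrite -hcv /coef big_hasC //; rewrite eqxx.
have [y [[T [hT eK ey]] e2]] := Pt_Psi hp.
have hRC := M1 hz hT.
rewrite eK -hu -ey -e2 ep in hRC.
apply: (RC_S Su hRC).
have -> : v = u + (v - u) by rewrite addrC subrK.
apply: inMD; first exact: SM.
rewrite -ep e2 ey hu -eK opprD addrACA subrr add0r -sumrB big_seq.
elim/big_ind: _ => //; first exact: inM0.
  exact: inMD.
move=> t ht; have [l el] := WW (allP hT t ht).
rewrite el; apply: inZA_M; apply: inZA_word; exact: lamb_lambda.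
Qed.
End Weyl.

Theorem lemma3p3 (R : realType) (n r : nat) (G L : 'M[R]_n)
  (ws : seq 'M[R]_n) (phi : seq 'rV[R]_n) (alpha lambda : 'I_r -> 'rV[R]_n)
  (S : 'rV[R]_n -> Prop) (u z : 'rV[R]_n) (k : 'I_r -> nat)
  (vs : seq 'rV[R]_n) (a : 'rV[R]_n -> int) :
  pos_def_sym G ->
  L \in unitmx ->
  finite_refl_group G ws ->
  preserves ws (inM L) ->
  root_system_for G ws phi ->
  simple_system phi alpha ->
  (forall i, inM L (alpha i)) ->
  (forall m, inM L m -> inLambda G alpha m) ->
  fund_weights G alpha lambda ->
  saturated_affine_semigroup L S ->
  W_stable ws S ->
  S u -> inD G alpha u ->
  inZ G alpha z -> u = z + \sum_i (k i)%:R *: lambda i ->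
  uniq vs ->
  (forall v, v \in vs -> inD G alpha v /\ inLambda G alpha v) ->
  (forall x, coef (Psi ws lambda z k) x = \sum_(v <- vs) a v * coef (orbsum ws v) x) ->
  forall v, v \in vs -> a v != 0 -> S v.
Proof.
move=> [Gsym Gpos] _ FG _ RS SS AM ML FW SAT WS Su _ hz hu uvs hvs hcoef v hv hav.
exact: (main_sec Gsym Gpos FG RS SS FW AM ML SAT WS Su hz hu uvs hvs hcoef hv hav).
Qed.
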